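(* Consider the discrete-time LPV system $x_{k+1}=A(p_k)x_k+B(p_k)u_k$ with affine $A(p)=A_0+\sum_{i=1}^{n_p}p_iA_i$, $B(p)=B_0+\sum_{i=1}^{n_p}p_iB_i$, and a data set $\mathcal{D}$ from it such that $\mathcal{D}_p$ has full row rank $(1+n_p)(n_x+n_u)$. Let $\gamma>0$, $Q\succeq0$, $R\succ0$. Suppose there exist $P\in\mathbb{S}^{n_x}$ with $P\succ0$, $\Xi\in\mathbb{S}^{4n_pn_x}$, $F_Q\in\mathbb{R}^{(N_d-1)(1+n_p)\times n_x(1+n_p)}$ with an associated $\mathcal{F}\in\mathbb{R}^{(N_d-1)\times n_x(1+n_p+n_p^2)}$ satisfying $\mathcal{F}[I_{n_x};\,p\otimes I_{n_x};\,p\otimes p\otimes I_{n_x}]=[I_{N_d-1};\,p\otimes I_{N_d-1}]^\top F_Q[I_{n_x};\,p\otimes I_{n_x}]$ for all $p\in\mathbb{P}$, and $\mathcal{Y}=[Y_0\ \bar Y]$ with $Y_0\in\mathbb{R}^{n_u\times n_x}$, $\bar Y\in\mathbb{R}^{n_u\times n_xn_p}$, such that $$\begin{bmatrix}P&0&0\\0&I_{n_p}\otimes P&0\\ Y_0&\bar Y&0\\ 0& I_{n_p}\otimes Y_0& I_{n_p}\otimes\bar Y\end{bmatrix}=\mathcal{D}_p\mathcal{F}$$ and the full-block LMI conditions (defined in the context) hold for all $p\in\mathbb{P}$ with $\Delta(p)=\mathrm{diag}(p)\otimes I_{2n_x}$, $$W=\begin{bmatrix}P_0&(\mathcal{X}_+F_Q)^\top&[Q^{1/2}P\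 \ 0]^\top&(R^{1/2}\mathcal{Y})^\top&0\\ \mathcal{X}_+F_Q&P_0&0&0&[I_{n_x}\ 0]^\top\\ [Q^{1/2}P\ \ 0]&0&\gamma I_{n_x}&0&0\\ R^{1/2}\mathcal{Y}&0&0&\gamma I_{n_u}&0\\ 0&[I_{n_x}\ 0]&0&0&\gamma I_{n_x}\end{bmatrix},$$ $P_0=\mathrm{blkdiag}(P,0_{n_xn_p})$, $\mathcal{X}_+=\mathrm{blkdiag}(X_+,I_{n_p}\otimes X_+)$, $L_{11}=0_{2n_xn_p}$, $L_{12}=[1_{n_p}\otimes I_{2n_x}\ \ 0_{2n_xn_p\times(2n_x+n_u)}]$, $L_{21}=\begin{bmatrix}0_{n_x\times 2n_xn_p}\\ I_{n_p}\otimes[I_{n_x}\ 0]\\ 0_{n_x\times 2n_xn_p}\\ I_{n_p}\otimes[0\ I_{n_x}]\\ 0_{(2n_x+n_u)\times 2n_xn_p}\end{bmatrix}$, $L_{22}=\begin{bmatrix}[I_{n_x}\ 0]&0\\ 1_{n_p}\otimes 0_{n_x\times 2n_x}&0\\ [0\ I_{n_x}]&0\\ 1_{n_p}\otimes 0_{n_x\times 2n_x}&0\\ 0&I_{2n_x+n_u}\end{bmatrix}$. Then the LPV state-feedback controller $K(p)=K_0+\sum_{i=1}^{n_p}p_iK_i$ with $K_0=Y_0P^{-1}$, $[K_1\ \cdots\ K_{n_p}]=\bar Y(I_{n_p}\otimes P)^{-1}$ stabilizes the system and the closed-loop generalized plant $x_{k+1}=(A(p_k)+B(p_k)K(p_k))x_k+w_k$,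 $z_k=\begin{bmatrix}Q^{1/2}\\ R^{1/2}K(p_k)\end{bmatrix}x_k$ has $\ell_2$-gain less than $\gamma$.
   Context: Notation: $\otimes$ Kronecker product; $I_n$ identity; $0_{n\times m}$, $0_n$ zero matrices; $1_n$ the all-ones vector; $\mathbb{S}^n$ real symmetric matrices; $\mathrm{blkdiag}$ block-diagonal concatenation; $\mathrm{diag}(p)$ diagonal matrix of entries of $p$; $[a;b]$ vertical stacking. The system has fully measured state $x_k\in\mathbb{R}^{n_x}$, input $u_k\in\mathbb{R}^{n_u}$, scheduling $p_k\in\mathbb{P}\subset\mathbb{R}^{n_p}$, $\mathbb{P}$ compact and convex; $A_i,B_i$ unknown real matrices. $\mathcal{D}=\{u^d_k,p^d_k,x^d_k\}_{k=1}^{N_d}$ is a trajectory of the system; $U=[u^d_1\cdots u^d_{N_d-1}]$, $U^p=[p^d_1\otimes u^d_1\cdots p^d_{N_d-1}\otimes u^d_{N_d-1}]$, $X=[x^d_1\cdots x^d_{N_d-1}]$, $X^p=[p^d_1\otimes x^d_1\cdots p^d_{N_d-1}\otimes x^d_{N_d-1}]$, $X_+=[x^d_2\cdots x^d_{N_d}]$, $\mathcal{D}_p=[X^\top\ (X^p)^\top\ U^\top\ (U^p)^\top]^\top$. Stabilizing means asymptotic stability of $x_{k+1}=(A(p_k)+B(p_k)K(p_k))x_k$ for all scheduling trajectories in $\mathbb{P}$. The $\ell_2$-gain of the plant is the infimum of $\gamma>0$ such that $\|z\|_2\le\gamma\|w\|_2$ for all its trajectories with $x_0=0$ (and all scheduling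 trajectories in $\mathbb{P}$), where $\|\cdot\|_2$ is the $\ell_2$-norm of a signal. Full-block LMI conditions for given $(\Delta(p),W,L_{11},L_{12},L_{21},L_{22})$ and symmetric $\Xi$: $\begin{bmatrix}L_{11}&L_{12}\\ I&0\end{bmatrix}^\top\Xi\begin{bmatrix}L_{11}&L_{12}\\ I&0\end{bmatrix}-\begin{bmatrix}L_{21}&L_{22}\end{bmatrix}^\top W\begin{bmatrix}L_{21}&L_{22}\end{bmatrix}\prec0$ and $\begin{bmatrix}I\\ \Delta(p)\end{bmatrix}^\top\Xi\begin{bmatrix}I\\ \Delta(p)\end{bmatrix}\succeq0$ for all $p\in\mathbb{P}$. *)

(* Defs.v *)
From HB Require Import structures.
From mathcomp Require Import all_boot all_order all_algebra.
From mathcomp Require Import mxtens.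
From mathcomp Require Import all_classical all_reals all_analysis.
Set Implicit Arguments.
Unset Strict Implicit.
Unset Printing Implicit Defensive.
Import Order.TTheory GRing.Theory Num.Theory.
Import numFieldNormedType.Exports.
Local Open Scope ring_scope.

(* [kron A B] is the Kronecker product A (x) B : 'M_(m*p, n*q), with the
   standard index convention (i,k) |-> i*p + k (mxtens_index). *)
Definition kron {R : pzRingType} {m n p q : nat}
  (A : 'M[R]_(m, n)) (B : 'M[R]_(p, q)) : 'M[R]_(m * p, n * q) := tensmx A B.

Definition kronv {R : pzRingType} {m a b : nat}
  (v : 'cV[R]_m) (A : 'M[R]_(a, b)) : 'M[R]_(m * a, b) :=
  castmx (erefl, mul1n b) (kron v A).

Definition quadf {R : pzRingType} {n} (M : 'M[R]_n) (x : 'cV[R]_n) : R :=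
  (x^T *m M *m x) ord0 ord0.
Definition posdef {R : numDomainType} {n} (M : 'M[R]_n) : Prop :=
  M^T = M /\ forall x : 'cV[R]_n, x != 0 -> 0 < quadf M x.
Definition possemidef {R : numDomainType} {n} (M : 'M[R]_n) : Prop :=
  M^T = M /\ forall x : 'cV[R]_n, 0 <= quadf M x.
Definition negdef {R : numDomainType} {n} (M : 'M[R]_n) : Prop :=
  posdef (- M).

(* M(p) = M_0 + \sum_{i=1}^{n_p} p_i M_i  (indices shifted to 0..np-1) *)
Definition affmx {R : pzRingType} {np m n : nat}
  (M0 : 'M[R]_(m, n)) (Mi : 'I_np -> 'M[R]_(m, n)) (p : 'cV[R]_np)
  : 'M[R]_(m, n) := M0 + \sum_(i < np) p i ord0 *: Mi i.

Definition colblock {R : Type} {nu np nx : nat}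
  (K : 'M[R]_(nu, np * nx)) (i : 'I_np) : 'M[R]_(nu, nx) :=
  \matrix_(r, c) K r (mxtens_index (i, c)).

(* samples are indexed 0..N (N = N_d - 1 columns); column j holds sample j *)
Definition dmx {R : Type} {n : nat} (N : nat) (v : nat -> 'cV[R]_n)
  : 'M[R]_(n, N) := \matrix_(i, j) v j i ord0.
Definition dmxp {R : pzRingType} {np n : nat} (N : nat)
  (p : nat -> 'cV[R]_np) (v : nat -> 'cV[R]_n) : 'M[R]_(np * n, N) :=
  \matrix_(i, j) kronv (p j) (v j) i ord0.
Definition Dp {R : pzRingType} {nx nu np : nat} (N : nat)
  (xd : nat -> 'cV[R]_nx) (ud : nat -> 'cV[R]_nu) (pd : nat -> 'cV[R]_np)
  : 'M[R]_(nx + np * nx + nu + np * nu, N) :=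
  col_mx (col_mx (col_mx (dmx N xd) (dmxp N pd xd)) (dmx N ud)) (dmxp N pd ud).
(* X_+ = [x_2 ... x_{N_d}] *)
Definition Xplus {R : Type} {nx : nat} (N : nat) (xd : nat -> 'cV[R]_nx)
  : 'M[R]_(nx, N) := dmx N (fun k => xd k.+1).

Fixpoint traj {R : pzRingType} {n : nat} (M : nat -> 'M[R]_n)
  (w : nat -> 'cV[R]_n) (x0 : 'cV[R]_n) (k : nat) : 'cV[R]_n :=
  match k with
  | 0 => x0
  | k'.+1 => M k' *m traj M w x0 k' + w k'
  end.

Definition vnorm {R : rcfType} {n : nat} (x : 'cV[R]_n) : R :=
  Num.sqrt (\sum_(i < n) x i ord0 ^+ 2).

Definition asym_stable {R : rcfType} {n : nat} (M : nat -> 'M[R]_n) : Prop :=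
  (forall eps : R, 0 < eps -> exists2 delta : R, 0 < delta &
     forall x0, vnorm x0 < delta -> forall k, vnorm (traj M (fun=> 0) x0 k) < eps)
  /\
  (exists2 delta : R, 0 < delta & forall x0, vnorm x0 < delta ->
     forall eps : R, 0 < eps -> exists K : nat, forall k, (K <= k)%N ->
       vnorm (traj M (fun=> 0) x0 k) < eps).

Definition l2norm {R : realType} {n : nat} (w : nat -> 'cV[R]_n) : \bar R :=
  sqrte (\sum_(0 <= k <oo) ((vnorm (w k)) ^+ 2)%:E)%E.

Definition l2_gain {R : realType} {n np nz : nat} (Pset : set 'cV[R]_np)
  (M : 'cV[R]_np -> 'M[R]_n) (C : 'cV[R]_np -> 'M[R]_(nz, n)) : \bar R :=
  ereal_inf [set g%:E | g in [set g : R | 0 < g /\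
     forall (p : nat -> 'cV[R]_np) (w : nat -> 'cV[R]_n),
       (forall k, Pset (p k)) ->
       (l2norm (fun k => C (p k) *m traj (fun k => M (p k)) w 0 k)
          <= g%:E * l2norm w)%E]].

Section FB.
Context {R : realType} (nx nu np N : nat).
Local Notation n1 := (nx + np * nx)%N.
Local Notation d := (nx + nx)%N.
Local Notation s := (nx + nu + nx)%N.
Local Notation m := (np * d)%N.

Definition Delta (p : 'cV[R]_np) : 'M[R]_m := kron (diag_mx p^T) (1%:M : 'M[R]_d).

Definition L11 : 'M[R]_m := 0.
Definition L12 : 'M[R]_(m, d + s) :=
  row_mx (kronv (const_mx 1 : 'cV[R]_np) (1%:M : 'M[R]_d)) 0.
Definition Lup : 'M[R]_(m + m, m + (d + s)) := block_mx L11 L12 1%:M 0.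

Definition L21 : 'M[R]_(n1 + n1 + s, m) :=
  col_mx
    (col_mx (col_mx 0 (kron (1%:M : 'M[R]_np) (row_mx 1%:M 0 : 'M[R]_(nx, d))))
            (col_mx 0 (kron (1%:M : 'M[R]_np) (row_mx 0 1%:M : 'M[R]_(nx, d)))))
    0.
Definition L22 : 'M[R]_(n1 + n1 + s, d + s) :=
  col_mx
    (col_mx (col_mx (row_mx (row_mx 1%:M 0 : 'M[R]_(nx, d)) 0) 0)
            (col_mx (row_mx (row_mx 0 1%:M : 'M[R]_(nx, d)) 0) 0))
    (row_mx 0 1%:M).
Definition Llow : 'M[R]_(n1 + n1 + s, m + (d + s)) := row_mx L21 L22.

Definition Wmx (gamma : R) (P : 'M[R]_nx) (FQ : 'M[R]_(N + np * N, n1))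
  (Xp : 'M[R]_(nx, N)) (Qh : 'M[R]_nx) (Rh : 'M[R]_nu)
  (Y0 : 'M[R]_(nu, nx)) (Ybar : 'M[R]_(nu, np * nx)) : 'M[R]_(n1 + n1 + s) :=
  let P0 : 'M[R]_n1 := block_mx P 0 0 (0 : 'M[R]_(np * nx)) in
  let Xcal : 'M[R]_(n1, N + np * N) :=
    block_mx Xp 0 0 (kron (1%:M : 'M[R]_np) Xp) in
  let XF : 'M[R]_n1 := Xcal *m FQ in
  let QP : 'M[R]_(nx, n1) := row_mx (Qh *m P) 0 in
  let RY : 'M[R]_(nu, n1) := Rh *m row_mx Y0 Ybar in
  let E : 'M[R]_(nx, n1) := row_mx 1%:M 0 in
  block_mx
    (block_mx P0 XF^T XF P0)
    (col_mx (row_mx (row_mx QP^T RY^T) 0) (row_mx (row_mx 0 0) E^T))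
    (col_mx (col_mx (row_mx QP 0) (row_mx RY 0)) (row_mx 0 E))
    (block_mx (block_mx (gamma%:M : 'M[R]_nx) 0 0 (gamma%:M : 'M[R]_nu)) 0 0
              (gamma%:M : 'M[R]_nx)).

Definition lhs_blk (P : 'M[R]_nx) (Y0 : 'M[R]_(nu, nx))
  (Ybar : 'M[R]_(nu, np * nx))
  : 'M[R]_(nx + np * nx + nu + np * nu, n1 + np * (np * nx)) :=
  col_mx
    (col_mx
      (col_mx (row_mx (row_mx P 0) 0)
              (row_mx (row_mx 0 (kron (1%:M : 'M[R]_np) P)) 0))
      (row_mx (row_mx Y0 Ybar) 0))
    (row_mx (row_mx 0 (kron (1%:M : 'M[R]_np) Y0)) (kron (1%:M : 'M[R]_np) Ybar)).
End FB.

(* Main.v *)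
Require Import Defs.
From HB Require Import structures.
From mathcomp Require Import all_boot all_order all_algebra.
From mathcomp Require Import mxtens.
From mathcomp Require Import all_classical all_reals all_analysis.
From mathcomp Require Import ring lra.
Import Order.TTheory GRing.Theory Num.Theory.
Import numFieldNormedType.Exports.
Set Implicit Arguments. Unset Strict Implicit. Unset Printing Implicit Defensive.
Local Open Scope ring_scope.

Section P1.
Variable R : realType.

Definition dot {n} (u v : 'cV[R]_n) : R := (u^T *m v) 0 0.
Definition sq {n} (u : 'cV[R]_n) : R := dot u u.

Lemma dotE {n} (u v : 'cV[R]_n) : dot u v = \sum_i u i 0 * v i 0.
Proof. by rewrite /dot mxE; apply: eq_bigr => i _; rewrite mxE. Qed.

Lemma dotC {n} (u v : 'cV[R]_n) : dot u v = dot v u.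
Proof. by rewrite !dotE; apply: eq_bigr => i _; rewrite mulrC. Qed.

Lemma dotDl {n} (u v w : 'cV[R]_n) : dot (u + v) w = dot u w + dot v w.
Proof. by rewrite !dotE -big_split; apply: eq_bigr => i _; rewrite !mxE mulrDl. Qed.
Lemma dotDr {n} (u v w : 'cV[R]_n) : dot w (u + v) = dot w u + dot w v.
Proof. by rewrite !(dotC w) dotDl. Qed.
Lemma dotNl {n} (u w : 'cV[R]_n) : dot (- u) w = - dot u w.
Proof. by rewrite !dotE -sumrN; apply: eq_bigr => i _; rewrite !mxE mulNr. Qed.
Lemma dotNr {n} (u w : 'cV[R]_n) : dot w (- u) = - dot w u.
Proof. by rewrite !(dotC w) dotNl. Qed.
Lemma dotZl {n} a (u w : 'cV[R]_n) : dot (a *: u) w = a * dot u w.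
Proof. by rewrite !dotE mulr_sumr; apply: eq_bigr => i _; rewrite !mxE mulrA. Qed.
Lemma dotZr {n} a (u w : 'cV[R]_n) : dot w (a *: u) = a * dot w u.
Proof. by rewrite !(dotC w) dotZl. Qed.
Lemma dot0l {n} (w : 'cV[R]_n) : dot 0 w = 0.
Proof. by rewrite dotE big1 // => i _; rewrite mxE mul0r. Qed.
Lemma dot0r {n} (w : 'cV[R]_n) : dot w 0 = 0.
Proof. by rewrite dotC dot0l. Qed.
Lemma dotBl {n} (u v w : 'cV[R]_n) : dot (u - v) w = dot u w - dot v w.
Proof. by rewrite dotDl dotNl. Qed.
Lemma dotBr {n} (u v w : 'cV[R]_n) : dot w (u - v) = dot w u - dot w v.
Proof. by rewrite dotDr dotNr. Qed.

Lemma dot_mul {n} m (u : 'cV[R]_n) (A : 'M[R]_(n, m)) v :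
  dot u (A *m v) = dot (A^T *m u) v.
Proof. by rewrite /dot trmx_mul trmxK mulmxA. Qed.

Lemma dot_col n1 n2 (u1 v1 : 'cV[R]_n1) (u2 v2 : 'cV[R]_n2) :
  dot (col_mx u1 u2) (col_mx v1 v2) = dot u1 v1 + dot u2 v2.
Proof. by rewrite /dot tr_col_mx mul_row_col mxE. Qed.

Lemma quadfE {n} (M : 'M[R]_n) x : quadf M x = dot x (M *m x).
Proof. by rewrite /quadf /dot mulmxA. Qed.

Lemma quadfN {n} (M : 'M[R]_n) x : quadf (- M) x = - quadf M x.
Proof. by rewrite !quadfE mulNmx dotNr. Qed.
Lemma quadfB {n} (M N : 'M[R]_n) x : quadf (M - N) x = quadf M x - quadf N x.
Proof. by rewrite !quadfE mulmxBl dotBr. Qed.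
Lemma quadf_tr {n} m (C : 'M[R]_(n, m)) M x : quadf (C^T *m M *m C) x = quadf M (C *m x).
Proof. by rewrite !quadfE -!mulmxA dot_mul trmxK. Qed.

Lemma sq_ge0 {n} (u : 'cV[R]_n) : 0 <= sq u.
Proof. by rewrite /sq dotE sumr_ge0 // => i _; rewrite -expr2 sqr_ge0. Qed.

Lemma sq_col n1 n2 (u1 : 'cV[R]_n1) (u2 : 'cV[R]_n2) :
  sq (col_mx u1 u2) = sq u1 + sq u2.
Proof. exact: dot_col. Qed.

Lemma sqZ {n} a (u : 'cV[R]_n) : sq (a *: u) = a ^+ 2 * sq u.
Proof. by rewrite /sq dotZl dotZr mulrA expr2. Qed.
Lemma sqN {n} (u : 'cV[R]_n) : sq (- u) = sq u.
Proof. by rewrite /sq dotNl dotNr opprK. Qed.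

Lemma entry_le_sq {n} (u : 'cV[R]_n) i : u i 0 ^+ 2 <= sq u.
Proof.
rewrite /sq dotE (bigD1 i) //= -expr2 lerDl sumr_ge0 // => j _.
by rewrite -expr2 sqr_ge0.
Qed.

Lemma CS {n} (c u : 'I_n -> R) :
  (\sum_i c i * u i) ^+ 2 <= (\sum_i c i ^+ 2) * (\sum_i u i ^+ 2).
Proof.
have E1 : (\sum_i c i * u i) ^+ 2 = \sum_i \sum_j (c i * u i) * (c j * u j).
  by rewrite expr2 mulr_suml; apply: eq_bigr => i _; rewrite mulr_sumr.
have E2 : (\sum_i c i ^+ 2) * (\sum_i u i ^+ 2) = \sum_i \sum_j c i ^+ 2 * u j ^+ 2.
  by rewrite mulr_suml; apply: eq_bigr => i _; rewrite mulr_sumr.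
have E3 : (\sum_i c i ^+ 2) * (\sum_i u i ^+ 2) = \sum_i \sum_j c j ^+ 2 * u i ^+ 2.
  by rewrite E2 exchange_big.
rewrite E1.
suff H : 2 * (\sum_i \sum_j c i * u i * (c j * u j)) <=
       ((\sum_i c i ^+ 2) * (\sum_i u i ^+ 2)) + ((\sum_i c i ^+ 2) * (\sum_i u i ^+ 2)).
  lra.
rewrite {1}E2 E3 -big_split /= mulr_sumr ler_sum // => i _.
rewrite -big_split /= mulr_sumr ler_sum // => j _.
have := sqr_ge0 (c i * u j - c j * u i); nra.
Qed.

Definition Qf {n} (a : 'I_n -> 'I_n -> R) (v : 'I_n -> R) :=
  \sum_i \sum_j v i * a i j * v j.

Lemma quadf_Qf {n} (M : 'M[R]_n) x :
  quadf M x = Qf (fun i j => M i j) (fun i => x i 0).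
Proof.
rewrite quadfE dotE /Qf; apply: eq_bigr => i _; rewrite mxE mulr_sumr.
by apply: eq_bigr => j _; rewrite mulrA.
Qed.

Definition ext {n} (v0 : R) (u : 'I_n -> R) : 'I_n.+1 -> R :=
  fun i => if unlift ord0 i is Some j then u j else v0.

Lemma ext0 {n} v0 (u : 'I_n -> R) : ext v0 u ord0 = v0.
Proof. by rewrite /ext unlift_none. Qed.
Lemma extS {n} v0 (u : 'I_n -> R) j : ext v0 u (lift ord0 j) = u j.
Proof. by rewrite /ext liftK. Qed.

Lemma Qf_dec {n} (a : 'I_n.+1 -> 'I_n.+1 -> R) v :
  Qf a v = a ord0 ord0 * v ord0 ^+ 2
   + 2 * v ord0 * (\sum_j (a ord0 (lift ord0 j) + a (lift ord0 j) ord0) / 2 * v (lift ord0 j))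
   + Qf (fun i j => a (lift ord0 i) (lift ord0 j)) (fun i => v (lift ord0 i)).
Proof.
rewrite /Qf big_ord_recl big_ord_recl /=.
have -> : \sum_(i < n) \sum_(j < n.+1) v (lift ord0 i) * a (lift ord0 i) j * v j
  = \sum_(i < n) (v (lift ord0 i) * a (lift ord0 i) ord0 * v ord0)
    + \sum_(i < n) \sum_(j < n) v (lift ord0 i) * a (lift ord0 i) (lift ord0 j) * v (lift ord0 j).
  by rewrite -big_split; apply: eq_bigr => i _; rewrite big_ord_recl.
rewrite !addrA; congr (_ + _).
rewrite mulr_sumr -addrA -big_split /=; congr (_ + _); first by rewrite expr2; ring.
apply: eq_bigr => j _; by field.
Qed.

End P1.

Section P2.
Variable R : realType.

Lemma margin_fun n (a : 'I_n -> 'I_n -> R) :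
  (forall v : 'I_n -> R, (exists i, v i != 0) -> 0 < Qf a v) ->
  exists2 e : R, 0 < e & forall v, e * \sum_i v i ^+ 2 <= Qf a v.
Proof.
elim: n a => [|n IH] a Hpos.
  by exists 1 => // v; rewrite big_ord0 /Qf big_ord0 mulr0.
set a00 := a ord0 ord0.
set c := fun j : 'I_n => (a ord0 (lift ord0 j) + a (lift ord0 j) ord0) / 2.
set a' := fun i j : 'I_n => a (lift ord0 i) (lift ord0 j).
set L := fun u : 'I_n -> R => \sum_j c j * u j.
have Hdec : forall v, Qf a v = a00 * v ord0 ^+ 2 + 2 * v ord0 * L (fun i => v (lift ord0 i))
     + Qf a' (fun i => v (lift ord0 i)) by move=> v; rewrite Qf_dec.
have Qf0 : forall m (b : 'I_m -> 'I_m -> R), Qf b (fun=> 0) = 0.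
  by move=> m b; rewrite /Qf big1 // => i _; rewrite big1 // => j _; rewrite !mul0r.
have L0 : L (fun=> 0) = 0 by rewrite /L big1 // => j _; rewrite mulr0.
have a00_gt0 : 0 < a00.
  have := Hpos (ext 1 (fun=> 0)); rewrite Hdec ext0.
  have -> : (fun i : 'I_n => ext 1 (fun=> 0 : R) (lift ord0 i)) = fun=> 0.
    by apply: boolp.funext => i; rewrite extS.
  rewrite L0 Qf0 expr1n mulr1 mulr0 !addr0; apply.
  by exists ord0; rewrite ext0 oner_eq0.
set S := fun i j => a' i j - c i * c j / a00.
have QfS : forall u, Qf S u = Qf a' u - L u ^+ 2 / a00.
  move=> u.
  have -> : L u ^+ 2 / a00 = \sum_i \sum_j u i * (c i * c j / a00) * u j.
    rewrite expr2 /L mulr_suml mulr_suml; apply: eq_bigr => i _.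
    rewrite mulr_sumr mulr_suml; apply: eq_bigr => j _.
    by field; rewrite gt_eqF.
  rewrite /Qf /S -sumrB; apply: eq_bigr => i _.
  rewrite -sumrB; apply: eq_bigr => j _; ring.
have [e' e'_gt0 He'] : exists2 e : R, 0 < e & forall u, e * \sum_i u i ^+ 2 <= Qf S u.
  apply: IH => u [i ui].
  have := Hpos (ext (- L u / a00) u); rewrite Hdec ext0.
  have -> : (fun i : 'I_n => ext (- L u / a00) u (lift ord0 i)) = u.
    by apply: boolp.funext => k; rewrite extS.
  rewrite QfS.
  have -> : a00 * (- L u / a00) ^+ 2 + 2 * (- L u / a00) * L u + Qf a' u
    = Qf a' u - L u ^+ 2 / a00 by field; rewrite gt_eqF.
  apply; exists (lift ord0 i); by rewrite extS.
set Cc := \sum_j c j ^+ 2.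
have Cc_ge0 : 0 <= Cc by rewrite sumr_ge0 // => j _; rewrite sqr_ge0.
set K := 2 * (Cc / a00 ^+ 2) + 1.
have K_gt0 : 0 < K.
  rewrite /K; have : 0 <= Cc / a00 ^+ 2 by rewrite divr_ge0 // sqr_ge0.
  lra.
set D := 2 / a00 + K / e'.
have D_gt0 : 0 < D by rewrite /D addr_gt0 // divr_gt0.
exists (D^-1); first by rewrite invr_gt0.
move=> v; rewrite big_ord_recl Hdec.
set v0 := v ord0; set u := fun i => v (lift ord0 i).
have -> : \sum_(i < n) v (lift ord0 i) ^+ 2 = \sum_i u i ^+ 2 by [].
set U := \sum_i u i ^+ 2.
have U_ge0 : 0 <= U by rewrite sumr_ge0 // => i _; rewrite sqr_ge0.
set t := L u / a00.
have hS : e' * U <= Qf a' u - L u ^+ 2 / a00 by rewrite -QfS; exact: He'.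
have ht : t ^+ 2 <= Cc / a00 ^+ 2 * U.
  have -> : Cc / a00 ^+ 2 * U = (Cc * U) / a00 ^+ 2 by rewrite mulrAC.
  rewrite /t expr_div_n ler_pM2r ?invr_gt0 ?exprn_gt0 //.
  exact: CS.
have Hq : a00 * v0 ^+ 2 + 2 * v0 * L u + Qf a' u = a00 * (v0 + t) ^+ 2 + (Qf a' u - L u ^+ 2 / a00).
  by rewrite /t; field; rewrite gt_eqF.
rewrite Hq.
have Hv0 : v0 ^+ 2 <= 2 * (v0 + t) ^+ 2 + 2 * t ^+ 2.
  have := sqr_ge0 (v0 + 2 * t); lra.
have Hsum : v0 ^+ 2 + U <= 2 * (v0 + t) ^+ 2 + K * U.
  rewrite /K; lra.
have HD : D^-1 * (2 * (v0 + t) ^+ 2 + K * U) <= a00 * (v0 + t) ^+ 2 + e' * U.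
  rewrite -(ler_pM2l D_gt0) mulrA mulfV ?gt_eqF // mul1r.
  set X := (v0 + t) ^+ 2.
  have -> : D * (a00 * X + e' * U) = 2 * X + K * U + (2 / a00 * (e' * U) + K / e' * (a00 * X)).
    by rewrite /D; field; rewrite !gt_eqF.
  have : 0 <= 2 / a00 * (e' * U).
    by apply: mulr_ge0; [apply: divr_ge0 | apply: mulr_ge0] => //; apply: ltW.
  have : 0 <= K / e' * (a00 * X).
    have hX : 0 <= X by rewrite /X sqr_ge0.
    by apply: mulr_ge0; [apply: divr_ge0 | apply: mulr_ge0] => //; apply: ltW.
  lra.
have : D^-1 * (v0 ^+ 2 + U) <= D^-1 * (2 * (v0 + t) ^+ 2 + K * U).
  by rewrite ler_pM2l ?invr_gt0.
lra.
Qed.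

Lemma margin n (M : 'M[R]_n) : (forall x, x != 0 -> 0 < quadf M x) ->
  exists2 e : R, 0 < e & forall x, e * sq x <= quadf M x.
Proof.
move=> H.
have [e e0 He] : exists2 e : R, 0 < e &
    forall v, e * \sum_i v i ^+ 2 <= Qf (fun i j => M i j) v.
  apply: margin_fun => v [i vi]; have := H (\col_j v j); rewrite quadf_Qf.
  have -> : (fun k => (\col_j v j) k 0) = v by apply: boolp.funext => k; rewrite mxE.
  apply; apply/eqP => E; move: vi.
  by have := congr1 (fun m : 'cV[R]_n => m i 0) E; rewrite !mxE /= => ->; rewrite eqxx.
exists e => // x; rewrite quadf_Qf /sq dotE.
have -> : \sum_i x i 0 * x i 0 = \sum_i x i 0 ^+ 2 by apply: eq_bigr => i _; rewrite expr2.
exact: (He (fun i => x i 0)).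
Qed.

Lemma quad_ub n (M : 'M[R]_n) : exists2 C : R, 0 < C & forall x, quadf M x <= C * sq x.
Proof.
exists (1 + \sum_i \sum_j `|M i j|).
  have : 0 <= \sum_i \sum_j `|M i j| by do 2 (apply: sumr_ge0 => ? _).
  lra.
move=> x; rewrite quadf_Qf /Qf mulrDl mul1r.
suff : \sum_i \sum_j x i 0 * M i j * x j 0 <= (\sum_i \sum_j `|M i j|) * sq x.
  by have := sq_ge0 x; lra.
rewrite mulr_suml; apply: ler_sum => i _; rewrite mulr_suml; apply: ler_sum => j _.
have hi := entry_le_sq x i; have hj := entry_le_sq x j.
have hM : 0 <= `|M i j| by [].
have h1 : x i 0 * M i j * x j 0 <= `|M i j| * (`|x i 0| * `|x j 0|).
  apply: le_trans (ler_norm _) _; rewrite !normrM; nra.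
have h2 : `|x i 0| * `|x j 0| <= sq x.
  have := sqr_ge0 (`|x i 0| - `|x j 0|).
  rewrite -(real_normK (num_real (x i 0))) -(real_normK (num_real (x j 0))) in hi hj.
  nra.
apply: le_trans h1 _; exact: ler_wpM2l.
Qed.

End P2.

Section P3.
Variable R : realType.

Lemma sum_tens m n (F : 'I_(m * n) -> R) :
  \sum_k F k = \sum_(i < m) \sum_(j < n) F (mxtens_index (i, j)).
Proof.
rewrite pair_big /=.
have -> : \sum_(p : 'I_m * 'I_n) F (mxtens_index (p.1, p.2)) =
          \sum_(p : 'I_m * 'I_n) F (mxtens_index p) by apply: eq_bigr => -[].
symmetry; rewrite (reindex (@mxtens_unindex m n)) /=.
  by apply: eq_bigr => k _; rewrite mxtens_unindexK.
by exists (@mxtens_index m n) => x _; [exact: mxtens_unindexK | exact: mxtens_indexK].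
Qed.

Lemma sum_delta n (F : 'I_n -> R) c : \sum_k F k * (k == c)%:R = F c.
Proof.
rewrite (bigD1 c) //= eqxx mulr1 big1 ?addr0 // => k /negbTE ->; by rewrite mulr0.
Qed.

Lemma kronvE m a b (v : 'cV[R]_m) (A : 'M[R]_(a, b)) i k j :
  kronv v A (mxtens_index (i, k)) j = v i 0 * A k j.
Proof.
rewrite /kronv /kron castmxE /= cast_ord_id.
have -> : cast_ord (esym (mul1n b)) j = mxtens_index (ord0, j).
  by apply: val_inj; rewrite /= mul0n add0n.
by rewrite tensmxE.
Qed.

Lemma kronE m n p q (A : 'M[R]_(m, n)) (B : 'M[R]_(p, q)) i j k l :
  kron A B (mxtens_index (i, j)) (mxtens_index (k, l)) = A i k * B j l.
Proof. exact: tensmxE. Qed.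

Lemma kronv_mul m a b c (v : 'cV[R]_m) (A : 'M[R]_(a, b)) (B : 'M[R]_(b, c)) :
  kronv v A *m B = kronv v (A *m B).
Proof.
apply/matrixP => r j; case: (mxtens_indexP r) => i k.
rewrite mxE kronvE mxE mulr_sumr; apply: eq_bigr => l _; by rewrite kronvE mulrA.
Qed.

Lemma kronvDr m a b (v : 'cV[R]_m) (A B : 'M[R]_(a, b)) :
  kronv v (A + B) = kronv v A + kronv v B.
Proof.
apply/matrixP => r j; case: (mxtens_indexP r) => i k.
by rewrite mxE !kronvE mxE mulrDr.
Qed.

Lemma kron_kronv m m' a a' b (M : 'M[R]_(m, m')) (A : 'M[R]_(a, a'))
  (v : 'cV[R]_m') (B : 'M[R]_(a', b)) :
  kron M A *m kronv v B = kronv (M *m v) (A *m B).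
Proof.
apply/matrixP => r j; case: (mxtens_indexP r) => i k.
rewrite mxE kronvE !mxE sum_tens mulr_suml; apply: eq_bigr => i' _.
rewrite mulr_sumr; apply: eq_bigr => k' _.
rewrite kronE kronvE; ring.
Qed.

Lemma kron11 m n : kron (1%:M : 'M[R]_m) (1%:M : 'M[R]_n) = 1%:M.
Proof.
apply/matrixP => r c; case: (mxtens_indexP r) => i k; case: (mxtens_indexP c) => i' k'.
rewrite kronE !mxE -natrM mulnb.
by rewrite (inj_eq (can_inj (@mxtens_indexK m n))) xpair_eqE.
Qed.

Lemma kron_mul m n p q r s (A : 'M[R]_(m, n)) (B : 'M[R]_(p, q))
  (C : 'M[R]_(n, r)) (D : 'M[R]_(q, s)) :
  kron A B *m kron C D = kron (A *m C) (B *m D).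
Proof. exact: tensmx_mul. Qed.

Lemma trkronv_kron1 n np N (p : 'cV[R]_np) (B : 'M[R]_(n, N)) :
  (kronv p (1%:M : 'M[R]_n))^T *m kron (1%:M : 'M[R]_np) B =
  B *m (kronv p (1%:M : 'M[R]_N))^T.
Proof.
apply: trmx_inj; rewrite !trmx_mul !trmxK /kron trmx_tens !trmx1.
rewrite -/(kron _ _) kron_kronv kronv_mul mul1mx mulmx1 mul1mx.
by [].
Qed.

Definition bar np a b (Mi : 'I_np -> 'M[R]_(a, b)) : 'M[R]_(a, np * b) :=
  \matrix_(r, c) Mi (mxtens_unindex c).1 r (mxtens_unindex c).2.

Lemma bar_kronv np a b c (Mi : 'I_np -> 'M[R]_(a, b)) p (M : 'M[R]_(b, c)) :
  bar Mi *m kronv p M = \sum_i p i 0 *: (Mi i *m M).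
Proof.
apply/matrixP => r j; rewrite mxE summxE sum_tens; apply: eq_bigr => i _.
rewrite !mxE mulr_sumr; apply: eq_bigr => k _.
by rewrite kronvE mxE mxtens_indexK /=; ring.
Qed.

Lemma sum_colblock nu np nx (M : 'M[R]_(nu, np * nx)) (p : 'cV[R]_np) :
  \sum_i p i 0 *: colblock M i = M *m kronv p (1%:M : 'M[R]_nx).
Proof.
apply/matrixP => r c; rewrite summxE !mxE sum_tens; apply: eq_bigr => i _.
rewrite !mxE.
under eq_bigr do rewrite kronvE mxE mulrCA.
by rewrite -mulr_sumr sum_delta.
Qed.

Lemma affmx_mul m n k (M0 : 'M[R]_(m, n)) np (Mi : 'I_np -> 'M[R]_(m, n)) p (B : 'M[R]_(n, k)) :
  affmx M0 Mi p *m B = M0 *m B + \sum_i p i 0 *: (Mi i *m B).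
Proof.
rewrite /affmx mulmxDl mulmx_suml; congr (_ + _); apply: eq_bigr => i _.
by rewrite scalemxAl.
Qed.

End P3.

Section P4.
Variable R : realType.

Lemma col_mul m n k (A : 'M[R]_(m, n)) (B : 'M[R]_(n, k)) j : col j (A *m B) = A *m col j B.
Proof. apply/matrixP => r c; rewrite !mxE; apply: eq_bigr => l _; by rewrite !mxE. Qed.

Lemma col_dmx n N (v : nat -> 'cV[R]_n) (j : 'I_N) : col j (dmx N v) = v j.
Proof. by apply/matrixP => r c; rewrite !mxE (ord1 c). Qed.

Lemma col_dmxp np n N (p : nat -> 'cV[R]_np) (v : nat -> 'cV[R]_n) (j : 'I_N) :
  col j (dmxp N p v) = kronv (p j) (v j).
Proof. by apply/matrixP => r c; rewrite !mxE (ord1 c). Qed.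

Definition Theta nx nu np (A0 : 'M[R]_nx) (Ai : 'I_np -> 'M[R]_nx)
  (B0 : 'M[R]_(nx, nu)) (Bi : 'I_np -> 'M[R]_(nx, nu)) :=
  row_mx (row_mx (row_mx A0 (bar Ai)) B0) (bar Bi).

Lemma Theta_mul nx nu np A0 Ai B0 Bi k (X1 : 'M[R]_(nx, k)) X2 (U1 : 'M[R]_(nu, k)) U2 :
  @Theta nx nu np A0 Ai B0 Bi *m col_mx (col_mx (col_mx X1 X2) U1) U2 =
  A0 *m X1 + bar Ai *m X2 + B0 *m U1 + bar Bi *m U2.
Proof. by rewrite /Theta !mul_row_col. Qed.

Lemma Theta_aff nx nu np A0 Ai B0 Bi k (p : 'cV[R]_np) (X : 'M[R]_(nx, k)) (U : 'M[R]_(nu, k)) :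
  @Theta nx nu np A0 Ai B0 Bi *m col_mx (col_mx (col_mx X (kronv p X)) U) (kronv p U) =
  affmx A0 Ai p *m X + affmx B0 Bi p *m U.
Proof. by rewrite Theta_mul !bar_kronv !affmx_mul !addrA. Qed.

Lemma data_rel nx nu np N A0 Ai B0 Bi (xd : nat -> 'cV[R]_nx) (ud : nat -> 'cV[R]_nu)
  (pd : nat -> 'cV[R]_np) :
  (forall k, (k < N)%N -> xd k.+1 = affmx A0 Ai (pd k) *m xd k + affmx B0 Bi (pd k) *m ud k) ->
  Xplus N xd = @Theta nx nu np A0 Ai B0 Bi *m Dp N xd ud pd.
Proof.
move=> hD; apply/matrixP => r j.
have -> : (Theta A0 Ai B0 Bi *m Dp N xd ud pd) r j = col j (Theta A0 Ai B0 Bi *m Dp N xd ud pd) r 0.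
  by rewrite [RHS]mxE.
rewrite col_mul /Dp !col_col_mx !col_dmx !col_dmxp Theta_aff -hD //.
by rewrite !mxE.
Qed.

End P4.

Section P5.
Variable R : realType.
Variables nx nu np N : nat.

Definition Gm n (p : 'cV[R]_np) : 'M[R]_(n + np * n, n) :=
  col_mx 1%:M (kronv p (1%:M : 'M[R]_n)).

Lemma lhsG (P : 'M[R]_nx) Y0 (Ybar : 'M[R]_(nu, np * nx)) p :
  lhs_blk P Y0 Ybar *m col_mx (col_mx (1%:M : 'M[R]_nx) (kronv p (1%:M : 'M[R]_nx)))
                  (kronv p (kronv p (1%:M : 'M[R]_nx)))
  = col_mx (col_mx (col_mx P (kronv p P)) (Y0 + Ybar *m kronv p 1%:M))
           (kronv p (Y0 + Ybar *m kronv p 1%:M)).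
Proof.
rewrite /lhs_blk !mul_col_mx !mul_row_col !mul0mx !addr0 !add0r !kron_kronv.
by rewrite !mul1mx !mulmx1 kronvDr.
Qed.

Lemma GtXcal (Xp : 'M[R]_(nx, N)) p :
  (Gm nx p)^T *m block_mx Xp 0 0 (kron (1%:M : 'M[R]_np) Xp) = Xp *m (Gm N p)^T.
Proof.
rewrite /Gm !tr_col_mx !trmx1 mul_row_block mul_mx_row !mulmx0 !mul1mx !addr0 add0r.
by rewrite trkronv_kron1 mulmx1.
Qed.

Lemma K_P (P : 'M[R]_nx) (Y0 : 'M[R]_(nu, nx)) (Ybar : 'M[R]_(nu, np * nx)) p :
  P \in unitmx ->
  affmx (Y0 *m invmx P) (colblock (Ybar *m invmx (kron (1%:M : 'M[R]_np) P))) p *m P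
  = Y0 + Ybar *m kronv p 1%:M.
Proof.
move=> uP.
have uK : kron (1%:M : 'M[R]_np) P \in unitmx.
  have : kron (1%:M : 'M[R]_np) P *m kron 1%:M (invmx P) = 1%:M.
    by rewrite kron_mul mulmx1 mulmxV // kron11.
  by case/mulmx1_unit.
rewrite /affmx mulmxDl -mulmxA mulVmx // mulmx1 sum_colblock; congr (_ + _).
rewrite -!mulmxA kronv_mul mul1mx.
have -> : kronv p P = kron (1%:M : 'M[R]_np) P *m kronv p 1%:M.
  by rewrite kron_kronv mul1mx mulmx1.
by rewrite (mulmxA (invmx _)) mulVmx // mul1mx.
Qed.

Lemma main_id (A0 : 'M[R]_nx) Ai B0 Bi (xd : nat -> 'cV[R]_nx) (ud : nat -> 'cV[R]_nu)
  (pd : nat -> 'cV[R]_np)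
  (hD : forall k, (k < N)%N -> xd k.+1 = affmx A0 Ai (pd k) *m xd k + affmx B0 Bi (pd k) *m ud k)
  (FQ : 'M[R]_(N + np * N, nx + np * nx))
  (Fc : 'M[R]_(N, nx + np * nx + np * (np * nx))) (p : 'cV[R]_np)
  (hFc : Fc *m col_mx (col_mx (1%:M : 'M[R]_nx) (kronv p (1%:M : 'M[R]_nx)))
                  (kronv p (kronv p (1%:M : 'M[R]_nx)))
     = (col_mx (1%:M : 'M[R]_N) (kronv p (1%:M : 'M[R]_N)))^T *m FQ
         *m col_mx (1%:M : 'M[R]_nx) (kronv p (1%:M : 'M[R]_nx)))
  (P : 'M[R]_nx) (Y0 : 'M[R]_(nu, nx)) (Ybar : 'M[R]_(nu, np * nx))
  (hY : lhs_blk P Y0 Ybar = Dp N xd ud pd *m Fc) (uP : P \in unitmx) :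
  (Gm nx p)^T *m (block_mx (Xplus N xd) 0 0 (kron (1%:M : 'M[R]_np) (Xplus N xd)) *m FQ)
    *m Gm nx p
  = (affmx A0 Ai p + affmx B0 Bi p *m
       affmx (Y0 *m invmx P) (colblock (Ybar *m invmx (kron (1%:M : 'M[R]_np) P))) p) *m P.
Proof.
rewrite mulmxA GtXcal -!mulmxA [(Gm N p)^T *m _]mulmxA /Gm -hFc.
rewrite mulmxA (data_rel hD) -(mulmxA (Theta _ _ _ _)) -hY -mulmxA lhsG Theta_aff.
by rewrite [RHS]mulmxDl -(mulmxA (affmx B0 Bi p)) K_P.
Qed.

End P5.

Section P6.
Variable R : realType.
Variables nx nu np N : nat.

Lemma dot_trmul m n (u : 'cV[R]_n) (A : 'M[R]_(m, n)) v : dot u (A^T *m v) = dot v (A *m u).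
Proof. by rewrite dot_mul trmxK dotC. Qed.

Lemma quadW gamma (P : 'M[R]_nx) (FQ : 'M[R]_(N + np * N, nx + np * nx)) Xp Qh (Rh : 'M[R]_nu)
  Y0 (Ybar : 'M[R]_(nu, np * nx)) (a b c e : 'cV[R]_nx) (d : 'cV[R]_nu) (ka kb : 'cV[R]_(np * nx)) :
  quadf (Wmx gamma P FQ Xp Qh Rh Y0 Ybar)
    (col_mx (col_mx (col_mx a ka) (col_mx b kb)) (col_mx (col_mx c d) e)) =
  dot a (P *m a) + 2 * dot (col_mx b kb) ((block_mx Xp 0 0 (kron (1%:M : 'M[R]_np) Xp) *m FQ) *m col_mx a ka)
  + dot b (P *m b) + 2 * dot c (Qh *m P *m a) + 2 * dot d (Rh *m (Y0 *m a + Ybar *m ka))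
  + 2 * dot e b + gamma * (sq c + sq d + sq e).
Proof.
rewrite quadfE /Wmx /=.
set XF := (block_mx _ _ _ _ *m FQ).
rewrite !(tr_row_mx, trmx0, trmx1, mul_block_col, mul_col_mx, mul_row_col).
rewrite !(mul0mx, mulmx0, addr0, add0r, mul1mx, mulmx1, add_col_mx, dot_col, dot0r, addr0).
rewrite !dotDr !dot_col !dot0r !dot_trmul !mul_scalar_mx !dotZr !addr0.
rewrite -!mulmxA mul_row_col (dotC b e) /sq.
ring.
Qed.

End P6.

Section P7.
Variable R : realType.
Variables nx nu np : nat.

Lemma L12_v (ab : 'cV[R]_(nx + nx)) (r : 'cV[R]_(nx + nu + nx)) :
  L12 (R := R) nx nu np *m col_mx ab r = kronv (const_mx 1 : 'cV[R]_np) ab.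
Proof. by rewrite /L12 mul_row_col mul0mx addr0 kronv_mul mul1mx. Qed.

Lemma Delta_kronv1 (p : 'cV[R]_np) (w : 'cV[R]_(nx + nx)) :
  Delta nx p *m kronv (const_mx 1 : 'cV[R]_np) w = kronv p w.
Proof.
rewrite /Delta kron_kronv mul1mx; congr kronv.
by apply/matrixP => i j; rewrite mul_diag_mx !mxE mulr1 (ord1 j).
Qed.

Lemma Lup_u (q : 'cV[R]_(np * (nx + nx))) (v : 'cV[R]_(nx + nx + (nx + nu + nx))) :
  Lup nx nu np *m col_mx q v = col_mx (L12 nx nu np *m v) q.
Proof. by rewrite /Lup mul_block_col /L11 !mul0mx add0r addr0 mul1mx. Qed.

Lemma Llow_u (p : 'cV[R]_np) (a b : 'cV[R]_nx) (r : 'cV[R]_(nx + nu + nx)) :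
  Llow nx nu np *m col_mx (kronv p (col_mx a b)) (col_mx (col_mx a b) r) =
  col_mx (col_mx (col_mx a (kronv p a)) (col_mx b (kronv p b))) r.
Proof.
rewrite /Llow /L21 /L22 mul_row_col.
rewrite !(mul_col_mx, mul_row_col, mul0mx, kron_kronv, mul1mx, mulmx1, addr0, add0r).
by rewrite !add_col_mx !(addr0, add0r).
Qed.

End P7.

Section P9.
Variable R : realType.

Lemma geo_small (r t : R) : 0 <= r -> r < 1 -> 0 < t ->
  exists K, forall k, (K <= k)%N -> r ^+ k < t.
Proof.
move=> r0 r1 t0.
have : `|r| < 1 by rewrite ger0_norm.
move=> /cvg_expr /cvgr0_norm_lt /(_ t t0) [K _ HK].
exists K => k Kk; have := HK k Kk; rewrite /= ger0_norm //; exact: exprn_ge0.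
Qed.

Lemma vnorm_sq n (x : 'cV[R]_n) : vnorm x = Num.sqrt (sq x).
Proof. by rewrite /vnorm /sq dotE; congr Num.sqrt; apply: eq_bigr => i _; rewrite expr2. Qed.

Lemma vnorm_lt n (x : 'cV[R]_n) e : 0 < e -> sq x < e ^+ 2 -> vnorm x < e.
Proof.
move=> e0 h; rewrite vnorm_sq -(ger0_norm (ltW e0)) -sqrtr_sqr ltr_sqrt //.
exact: exprn_gt0.
Qed.

Lemma vnorm_lt_sq n (x : 'cV[R]_n) e : vnorm x < e -> sq x < e ^+ 2.
Proof.
move=> h; have h0 : 0 <= vnorm x by rewrite vnorm_sq sqrtr_ge0.
have : vnorm x ^+ 2 = sq x by rewrite vnorm_sq sqr_sqrtr // sq_ge0.
move=> <-; nra.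
Qed.

End P9.

Section P10.
Variable R : realType.
Local Open Scope ereal_scope.

Lemma vnorm2 n (x : 'cV[R]_n) : (vnorm x ^+ 2)%R = sq x.
Proof. by rewrite vnorm_sq sqr_sqrtr // sq_ge0. Qed.

Lemma l2_bound n m (z : nat -> 'cV[R]_n) (w : nat -> 'cV[R]_m) (g0 : R) : (0 <= g0)%R ->
  (forall K, (\sum_(k < K) sq (z k) <= g0 ^+ 2 * \sum_(k < K) sq (w k))%R) ->
  l2norm z <= g0%:E * l2norm w.
Proof.
move=> g00 H; rewrite /l2norm.
have hw : forall k, 0 <= ((vnorm (w k)) ^+ 2)%:E by move=> k; rewrite lee_fin vnorm2 sq_ge0.
have hz : forall k, 0 <= ((vnorm (z k)) ^+ 2)%:E by move=> k; rewrite lee_fin vnorm2 sq_ge0.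
have Sw0 : 0 <= \sum_(0 <= k <oo) ((vnorm (w k)) ^+ 2)%:E by apply: nneseries_ge0 => k _ _.
have -> : g0%:E = sqrte ((g0 ^+ 2)%:E) by rewrite /= sqrtr_sqr ger0_norm.
rewrite -sqrteM ?lee_fin ?exprn_ge0 // lee_sqrt; last by rewrite mule_ge0 // lee_fin exprn_ge0.
apply: lime_le; first by apply: is_cvg_nneseries => k _ _.
apply: nearW => K /=.
rewrite sumEFin big_mkord.
apply: le_trans (_ : ((g0 ^+ 2)%:E * (\sum_(k < K) sq (w k))%:E) <= _).
  rewrite -EFinM lee_fin; apply: le_trans (H K).
  by apply: ler_sum => k _; rewrite vnorm2.
apply: lee_wpmul2l; first by rewrite lee_fin exprn_ge0.
have := @nneseries_lim_ge R (fun k => ((vnorm (w k)) ^+ 2)%:E) xpredT 0 K (fun k _ _ => hw k).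
rewrite sumEFin big_mkord.
have -> : (\sum_(k < K) (vnorm (w k) ^+ 2) = \sum_(k < K) sq (w k))%R.
  by apply: eq_bigr => k _; rewrite vnorm2.
by [].
Qed.

End P10.

Section P8.
Variable R : realType.
Variables nx nu np N : nat.
Variable Pset : set 'cV[R]_np.
Variables (A0 : 'M[R]_nx) (Ai : 'I_np -> 'M[R]_nx)
  (B0 : 'M[R]_(nx, nu)) (Bi : 'I_np -> 'M[R]_(nx, nu)).
Variables (xd : nat -> 'cV[R]_nx) (ud : nat -> 'cV[R]_nu) (pd : nat -> 'cV[R]_np).
Hypothesis hD : forall k, (k < N)%N -> Pset (pd k) /\
          xd k.+1 = affmx A0 Ai (pd k) *m xd k + affmx B0 Bi (pd k) *m ud k.
Variables (gamma : R) (Qh : 'M[R]_nx) (Rh : 'M[R]_nu) (P : 'M[R]_nx).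
Hypothesis hP : posdef P.
Hypothesis hgamma : 0 < gamma.
Variable Xi : 'M[R]_(np * (nx + nx) + np * (nx + nx)).
Variables (FQ : 'M[R]_(N + np * N, nx + np * nx))
  (Fc : 'M[R]_(N, nx + np * nx + np * (np * nx))).
Hypothesis hFc : forall p, Pset p ->
     Fc *m col_mx (col_mx (1%:M : 'M[R]_nx) (kronv p (1%:M : 'M[R]_nx)))
                  (kronv p (kronv p (1%:M : 'M[R]_nx)))
     = (col_mx (1%:M : 'M[R]_N) (kronv p (1%:M : 'M[R]_N)))^T *m FQ
         *m col_mx (1%:M : 'M[R]_nx) (kronv p (1%:M : 'M[R]_nx)).
Variables (Y0 : 'M[R]_(nu, nx)) (Ybar : 'M[R]_(nu, np * nx)).
Hypothesis hY : lhs_blk P Y0 Ybar = Dp N xd ud pd *m Fc.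
Hypothesis hLMI1 : negdef ((Lup nx nu np)^T *m Xi *m Lup nx nu np
             - (Llow nx nu np)^T *m Wmx gamma P FQ (Xplus N xd) Qh Rh Y0 Ybar
                 *m Llow nx nu np).
Hypothesis hLMI2 : forall p, Pset p ->
     possemidef ((col_mx 1%:M (Delta nx p))^T *m Xi *m col_mx 1%:M (Delta nx p)).

Definition Kf (p : 'cV[R]_np) := affmx (Y0 *m invmx P)
   (colblock (Ybar *m invmx (kron (1%:M : 'M[R]_np) P))) p.
Definition Aclf (p : 'cV[R]_np) := affmx A0 Ai p + affmx B0 Bi p *m Kf p.

Lemma P_unit : P \in unitmx.
Proof.
rewrite -row_free_unit -kermx_eq0; apply/negPn/negP => /rowV0Pn [v /sub_kermxP vP v0].
case: hP => Psym Ppos.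
have H : 0 < quadf P v^T.
  by apply: Ppos; apply: contra v0 => /eqP h; apply/eqP; rewrite -(trmxK v) h trmx0.
have E : P *m v^T = 0 by rewrite -Psym -trmx_mul vP trmx0.
by rewrite quadfE E dot0r ltxx in H.
Qed.

Lemma dot_mull m n (B : 'M[R]_(m, n)) u v : dot (B *m u) v = dot u (B^T *m v).
Proof. by rewrite dotC dot_mul dotC. Qed.

Lemma key : exists2 e0 : R, 0 < e0 & forall p, Pset p ->
  forall (a b c e : 'cV[R]_nx) (d : 'cV[R]_nu),
  e0 * (sq a + sq b + sq c + sq d + sq e) <=
  dot a (P *m a) + 2 * dot b (Aclf p *m P *m a) + dot b (P *m b)
  + 2 * dot c (Qh *m (P *m a)) + 2 * dot d (Rh *m (Kf p *m P *m a))
  + 2 * dot e b + gamma * (sq c + sq d + sq e).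
Proof.
have [e0 e0_gt0 He0] := margin (proj2 hLMI1).
exists e0 => // p Pp a b c e d.
set v := col_mx (col_mx a b) (col_mx (col_mx c d) e).
set u := col_mx (kronv p (col_mx a b)) v.
have := He0 u.
rewrite quadfN quadfB opprB !quadf_tr Lup_u Llow_u L12_v.
have -> : col_mx (kronv (const_mx 1) (col_mx a b)) (kronv p (col_mx a b)) =
   col_mx 1%:M (Delta nx p) *m kronv (const_mx 1 : 'cV[R]_np) (col_mx a b).
  by rewrite mul_col_mx mul1mx Delta_kronv1.
rewrite -quadf_tr.
have hX := (proj2 (hLMI2 Pp)) (kronv (const_mx 1 : 'cV[R]_np) (col_mx a b)).
rewrite quadW.
have -> : col_mx a (kronv p a) = Gm nx p *m a by rewrite /Gm mul_col_mx mul1mx kronv_mul mul1mx.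
have -> : col_mx b (kronv p b) = Gm nx p *m b by rewrite /Gm mul_col_mx mul1mx kronv_mul mul1mx.
have MI := main_id (fun k hk => proj2 (hD hk)) (hFc Pp) hY P_unit.
rewrite mulmxA in MI.
rewrite (dot_mull (Gm nx p)) !mulmxA MI.
rewrite -/(Kf p) -/(Aclf p).
have -> : Y0 *m a + Ybar *m kronv p a = Kf p *m P *m a.
  by rewrite /Kf K_P ?P_unit // mulmxDl -mulmxA kronv_mul mul1mx.
rewrite /u /v !sq_col.
rewrite !mulmxA => H.
have hk : 0 <= e0 * sq (kronv p (col_mx a b)) by rewrite mulr_ge0 ?sq_ge0 // ltW.
move: H; rewrite !mulrDr; lra.
Qed.


Definition Xm := invmx P.
Definition Vf (y : 'cV[R]_nx) := dot y (Xm *m y).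

Lemma PX (y : 'cV[R]_nx) : P *m (Xm *m y) = y.
Proof. by rewrite mulmxA mulmxV ?P_unit // mul1mx. Qed.

Lemma Xsym : Xm^T = Xm.
Proof. by rewrite /Xm trmx_inv (proj1 hP). Qed.

Lemma step : exists2 e0 : R, 0 < e0 & forall p, Pset p -> forall x w,
  e0 * (sq (Xm *m x) + gamma^-1 ^+ 2 * (sq (Qh *m x) + sq (Rh *m (Kf p *m x)))) <=
  Vf x - Vf (Aclf p *m x + w) - gamma^-1 * (sq (Qh *m x) + sq (Rh *m (Kf p *m x)))
  + gamma * sq w.
Proof.
have [e0 e0_gt0 Hk] := key.
exists e0 => // p Pp x w.
set xp := Aclf p *m x + w.
set gi := gamma^-1.
have H := Hk p Pp (Xm *m x) (- (Xm *m xp)) (- gi *: (Qh *m x)) w (- gi *: (Rh *m (Kf p *m x))).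
rewrite -!mulmxA !PX in H.
rewrite !sqN !sqZ !dotNl !dotNr !dotZl !mulmxN dotNr opprK PX in H.
have E1 : dot (Xm *m x) x = Vf x by rewrite /Vf dotC.
have E2 : dot (Xm *m xp) xp = Vf xp by rewrite /Vf dotC.
have E3 : Vf xp = dot (Xm *m xp) (Aclf p *m x) + dot w (Xm *m xp).
  by rewrite /Vf {1}/xp dotDl dotC.
have E4 : dot (Qh *m x) (Qh *m x) = sq (Qh *m x) by [].
have E5 : dot (Rh *m (Kf p *m x)) (Rh *m (Kf p *m x)) = sq (Rh *m (Kf p *m x)) by [].
rewrite E1 E2 E4 E5 sqrrN in H.
have hg : gamma * gi = 1 by rewrite mulfV // gt_eqF.
have hgi : 0 < gi by rewrite invr_gt0.
have hq := sq_ge0 (Xm *m xp); have hq2 := sq_ge0 w.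
set sQ := sq (Qh *m x) in H *; set sR := sq (Rh *m (Kf p *m x)) in H *.
have hsQ : 0 <= sQ by apply: sq_ge0.
have hsR : 0 <= sR by apply: sq_ge0.
rewrite E3 in H *.
have E6 : gamma * (gi ^+ 2 * sQ + gi ^+ 2 * sR + sq w) = gi * sQ + gi * sR + gamma * sq w.
  by rewrite expr2 !mulrDr !mulrA hg !mul1r.
rewrite E6 in H.
have h1 : 0 <= e0 * sq (Xm *m xp) by rewrite mulr_ge0 // ltW.
have h2 : 0 <= e0 * sq w by rewrite mulr_ge0 // ltW.
move: H; rewrite !mulrDr; lra.
Qed.

Lemma Vf_P y : Vf y = quadf P (Xm *m y).
Proof. by rewrite /Vf quadfE PX dotC. Qed.

Lemma Vf_bounds : exists cX CX CP : R, [/\ 0 < cX, 0 < CX, 0 < CP &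
  forall y, [/\ cX * sq y <= Vf y, Vf y <= CX * sq y & Vf y <= CP * sq (Xm *m y)]].
Proof.
have [cX cXp HcX] : exists2 e : R, 0 < e & forall x, e * sq x <= quadf Xm x.
  apply: margin => y y0; rewrite quadfE -/(Vf y) Vf_P.
  apply: (proj2 hP); apply: contra y0 => /eqP h; by rewrite -(PX y) h mulmx0.
have [CP CPp HCP] := quad_ub P.
have [CX CXp HCX] := quad_ub Xm.
exists cX, CX, CP; split => // y; split.
- by rewrite /Vf -quadfE.
- by rewrite /Vf -quadfE.
- by rewrite Vf_P.
Qed.

Lemma contraction : exists2 rho : R, 0 <= rho < 1 & forall p, Pset p -> forall x,
  Vf (Aclf p *m x) <= rho * Vf x.
Proof.
have [e0 e0p Hs] := step.
have [cX [CX [CP [cXp CXp CPp HB]]]] := Vf_bounds.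
exists (1 - e0 / (CP + e0)).
  have h1 : 0 < e0 / (CP + e0) by rewrite divr_gt0 // addr_gt0.
  have h2 : e0 / (CP + e0) <= 1 by rewrite ler_pdivrMr ?addr_gt0 // mul1r lerDr ltW.
  apply/andP; split; lra.
move=> p Pp x.
have := Hs p Pp x 0; rewrite addr0.
have -> : sq (0 : 'cV[R]_nx) = 0 by rewrite /sq dot0l.
have [_ _ hP1] := HB x.
set sX := sq (Xm *m x).
have hsX : 0 <= sX by apply: sq_ge0.
set S := sq (Qh *m x) + sq (Rh *m (Kf p *m x)).
have hS : 0 <= S by rewrite addr_ge0 // sq_ge0.
have hgi : 0 < gamma^-1 by rewrite invr_gt0.
have h3 : 0 <= e0 * (gamma^-1 ^+ 2 * S) by rewrite !mulr_ge0 // ?ltW // exprn_ge0 // ltW.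
have h4 : 0 <= gamma^-1 * S by rewrite mulr_ge0 // ltW.
move=> H.
have H1 : e0 * sX <= Vf x - Vf (Aclf p *m x).
  move: H; rewrite mulr0 addr0 mulrDr; lra.
have H2 : e0 / (CP + e0) * Vf x <= e0 * sX.
  rewrite mulrAC ler_pdivrMr ?addr_gt0 // -mulrA ler_pM2l //.
  have : 0 <= e0 * sX by rewrite mulr_ge0 // ltW.
  have hP1' : Vf x <= CP * sX := hP1.
  rewrite mulrDr; nra.
rewrite mulrBl mul1r; lra.
Qed.

Lemma traj_bound (p : nat -> 'cV[R]_np) (rho : R) : 0 <= rho ->
  (forall k x, Vf (Aclf (p k) *m x) <= rho * Vf x) ->
  forall x0 k, Vf (traj (fun k => Aclf (p k)) (fun=> 0) x0 k) <= rho ^+ k * Vf x0.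
Proof.
move=> r0 Hc x0; elim=> [|k IH] /=; first by rewrite expr0 mul1r.
rewrite addr0; apply: le_trans (Hc _ _) _.
rewrite exprSr; nra.
Qed.

Lemma stab (p : nat -> 'cV[R]_np) : (forall k, Pset (p k)) ->
  asym_stable (fun k => Aclf (p k)).
Proof.
move=> Pp.
have [rho /andP [r0 r1] Hc] := contraction.
have [cX [CX [CP [cXp CXp CPp HB]]]] := Vf_bounds.
have Htr := traj_bound r0 (fun k x => Hc (p k) (Pp k) x).
pose tr := traj (fun k => Aclf (p k)) (fun=> (0 : 'cV[R]_nx)).
have Hk : forall x0 k, cX * sq (tr x0 k) <= rho ^+ k * (CX * sq x0).
  move=> x0 k; have [h1 _ _] := HB (tr x0 k); have [_ h2 _] := HB x0.
  apply: le_trans h1 _; apply: le_trans (Htr x0 k) _.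
  by rewrite ler_wpM2l // exprn_ge0.
split.
- move=> eps eps0.
  set kap := CX / cX.
  have kap0 : 0 < kap by rewrite divr_gt0.
  exists (eps / (1 + kap)); first by rewrite divr_gt0 // addr_gt0.
  move=> x0 hx0 k; apply: vnorm_lt => //.
  have hs0 := vnorm_lt_sq hx0.
  have hsk : sq (tr x0 k) <= kap * sq x0.
    have hk1 : rho ^+ k <= 1 by apply: exprn_ile1 => //; apply: ltW.
    have hk2 := Hk x0 k.
    have hk3 : 0 <= CX * sq x0 by rewrite mulr_ge0 ?sq_ge0 // ltW.
    have hk4 : 0 <= rho ^+ k by apply: exprn_ge0.
    have : cX * sq (tr x0 k) <= CX * sq x0 by nra.
    move=> h; rewrite /kap mulrAC ler_pdivlMr //; nra.
  apply: le_lt_trans hsk _.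
  have h1 : kap * sq x0 <= kap * (eps / (1 + kap)) ^+ 2 by rewrite ler_wpM2l ?ltW.
  apply: le_lt_trans h1 _.
  rewrite expr_div_n mulrA ltr_pdivrMr ?exprn_gt0 ?addr_gt0 //.
  have he : 0 < eps ^+ 2 by rewrite exprn_gt0.
  nra.
- exists 1 => // x0 _ eps eps0.
  set s0 := CX * sq x0.
  have s00 : 0 <= s0 by rewrite mulr_ge0 ?sq_ge0 // ltW.
  have t0 : 0 < cX * eps ^+ 2 / (s0 + 1) by rewrite !divr_gt0 ?mulr_gt0 ?exprn_gt0 // ltr_wpDl.
  have [K HK] := geo_small r0 r1 t0.
  exists K => k Kk; apply: vnorm_lt => //.
  have h := HK k Kk; rewrite ltr_pdivlMr ?ltr_wpDl // in h.
  have hr : 0 <= rho ^+ k by rewrite exprn_ge0.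
  have h2 := Hk x0 k; rewrite -/s0 in h2.
  rewrite -(ltr_pM2l cXp); apply: le_lt_trans h2 _.
  nra.
Qed.

Lemma Vf_ge0 y : 0 <= Vf y.
Proof.
have [cX [CX [CP [cXp CXp CPp HB]]]] := Vf_bounds.
have [h _ _] := HB y; apply: le_trans h; by rewrite mulr_ge0 ?sq_ge0 // ltW.
Qed.

Lemma gain_partial : exists2 g0 : R, 0 <= g0 /\ g0 < gamma &
  forall p : nat -> 'cV[R]_np, (forall k, Pset (p k)) -> forall (w : nat -> 'cV[R]_nx) K,
  \sum_(k < K) sq (col_mx Qh (Rh *m Kf (p k)) *m traj (fun k => Aclf (p k)) w 0 k)
   <= g0 ^+ 2 * \sum_(k < K) sq (w k).
Proof.
have [e0 e0p Hs] := step.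
set gi := gamma^-1.
have gi0 : 0 < gi by rewrite invr_gt0.
have hg : gamma * gi = 1 by rewrite mulfV // gt_eqF.
set al := gi + e0 * gi ^+ 2.
have al0 : 0 < al by rewrite addr_gt0 // mulr_gt0 // exprn_gt0.
have g20 : 0 <= gamma / al by rewrite divr_ge0 // ltW.
exists (Num.sqrt (gamma / al)).
  split; first exact: sqrtr_ge0.
  rewrite -[X in _ < X](ger0_norm (ltW hgamma)) -sqrtr_sqr ltr_sqrt ?exprn_gt0 //.
  rewrite ltr_pdivrMr // expr2.
  have -> : gamma * gamma * al = gamma + e0.
    by rewrite /al /gi; field; rewrite gt_eqF.
  lra.
move=> p Pp w.
set x := traj (fun k => Aclf (p k)) w 0.
have Hind : forall K, al * \sum_(k < K) sq (col_mx Qh (Rh *m Kf (p k)) *m x k) + Vf (x K)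
   <= gamma * \sum_(k < K) sq (w k).
  elim=> [|K IH].
    by rewrite !big_ord0 !mulr0 add0r /x /= /Vf dot0l.
  rewrite !big_ord_recr /=.
  have Hst := Hs (p K) (Pp K) (x K) (w K); rewrite -/gi in Hst.
  have -> : x K.+1 = Aclf (p K) *m x K + w K by [].
  rewrite mul_col_mx sq_col -mulmxA.
  set sQ := sq (Qh *m x K) in Hst *; set sR := sq (Rh *m (Kf (p K) *m x K)) in Hst *.
  have h1 : 0 <= e0 * sq (Xm *m x K) by rewrite mulr_ge0 ?sq_ge0 // ltW.
  move: Hst IH; rewrite /al !mulrDr !mulrDl.
  lra.
move=> K.
have := Hind K; have := Vf_ge0 (x K) => hv hK.
rewrite sqr_sqrtr // mulrAC ler_pdivlMr //; nra.
Qed.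

End P8.

Theorem theorem6 (R : realType) (nx nu np N : nat)
  (* scheduling set: compact and convex *)
  (Pset : set 'cV[R]_np)
  (hPc : compact Pset) (hPv : convex_set (Pset : set (convex_lmodType 'cV[R]_np)))
  (* unknown system matrices A(p) = A0 + sum p_i A_i, B(p) = B0 + sum p_i B_i *)
  (A0 : 'M[R]_nx) (Ai : 'I_np -> 'M[R]_nx)
  (B0 : 'M[R]_(nx, nu)) (Bi : 'I_np -> 'M[R]_(nx, nu))
  (* data set, samples 0..N (N = N_d - 1) *)
  (xd : nat -> 'cV[R]_nx) (ud : nat -> 'cV[R]_nu) (pd : nat -> 'cV[R]_np)
  (hD : forall k, (k < N)%N -> Pset (pd k) /\
          xd k.+1 = affmx A0 Ai (pd k) *m xd k + affmx B0 Bi (pd k) *m ud k)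
  (hrank : \rank (Dp N xd ud pd) = ((1 + np) * (nx + nu))%N)
  (* gamma, Q, R and their square roots *)
  (gamma : R) (hgamma : 0 < gamma)
  (Q : 'M[R]_nx) (hQ : possemidef Q) (Rw : 'M[R]_nu) (hR : posdef Rw)
  (Qh : 'M[R]_nx) (hQh : possemidef Qh /\ Qh *m Qh = Q)
  (Rh : 'M[R]_nu) (hRh : posdef Rh /\ Rh *m Rh = Rw)
  (* decision variables *)
  (P : 'M[R]_nx) (hP : posdef P)
  (Xi : 'M[R]_(np * (nx + nx) + np * (nx + nx))) (hXi : Xi^T = Xi)
  (FQ : 'M[R]_(N + np * N, nx + np * nx))
  (Fc : 'M[R]_(N, nx + np * nx + np * (np * nx)))
  (hFc : forall p, Pset p ->
     Fc *m col_mx (col_mx (1%:M : 'M[R]_nx) (kronv p (1%:M : 'M[R]_nx)))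
                  (kronv p (kronv p (1%:M : 'M[R]_nx)))
     = (col_mx (1%:M : 'M[R]_N) (kronv p (1%:M : 'M[R]_N)))^T *m FQ
         *m col_mx (1%:M : 'M[R]_nx) (kronv p (1%:M : 'M[R]_nx)))
  (Y0 : 'M[R]_(nu, nx)) (Ybar : 'M[R]_(nu, np * nx))
  (hY : lhs_blk P Y0 Ybar = Dp N xd ud pd *m Fc)
  (* full-block LMI conditions *)
  (hLMI1 : negdef ((Lup nx nu np)^T *m Xi *m Lup nx nu np
             - (Llow nx nu np)^T *m Wmx gamma P FQ (Xplus N xd) Qh Rh Y0 Ybar
                 *m Llow nx nu np))
  (hLMI2 : forall p, Pset p ->
     possemidef ((col_mx 1%:M (Delta nx p))^T *m Xi *m col_mx 1%:M (Delta nx p))) :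
  let K0 := Y0 *m invmx P in
  let Kbar := Ybar *m invmx (kron (1%:M : 'M[R]_np) P) in
  let K := fun p : 'cV[R]_np => affmx K0 (colblock Kbar) p in
  let Acl := fun p : 'cV[R]_np => affmx A0 Ai p + affmx B0 Bi p *m K p in
  (* K(p) stabilizes the LPV system for all scheduling trajectories in Pset *)
  (forall p : nat -> 'cV[R]_np, (forall k, Pset (p k)) ->
     asym_stable (fun k => Acl (p k)))
  /\
  (* the closed-loop generalized plant has l2-gain less than gamma *)
  (l2_gain Pset Acl (fun p => col_mx Qh (Rh *m K p)) < gamma%:E)%E.
Proof.
move=> K0 Kbar K Acl; split.
  by move=> p Pp; exact: (stab hD hP hgamma hFc hY hLMI1 hLMI2 Pp).
have [g0 [g00 g0lt] Hg] := gain_partial hD hP hgamma hFc hY hLMI1 hLMI2.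
set g1 := (g0 + gamma) / 2.
have g10 : 0 < g1 by rewrite /g1 divr_gt0 //; lra.
have g1lt : g1 < gamma by rewrite /g1 ltr_pdivrMr //; lra.
have g01 : g0 ^+ 2 <= g1 ^+ 2.
  by rewrite ler_pXn2r // ?nnegrE ?(ltW g10) // /g1 ler_pdivlMr //; lra.
apply: (@le_lt_trans _ _ g1%:E); last by rewrite lte_fin.
apply: ereal_inf_lbound; exists g1 => //; split => // p w Pp.
apply: l2_bound; first exact: ltW.
move=> n; apply: le_trans (Hg p Pp w n) _.
by rewrite ler_wpM2r // sumr_ge0 // => k _; apply: sq_ge0.
Qed.
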